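(* Let $\mathcal{V}$ be the list of vectors produced by the first reduction (described in the context) from an instance of the (3,2-2) Set Splitting Problem with variables $x(1),\dots,x(n)$ and sets $S_1,\dots,S_m$. Let $z(i,h) \in \{\pm1\}$ for $1 \le i \le n$, $1 \le h \le 4$, and $w(j,h) \in \{\pm 1\}$ for $j \in B$, $1 \le h \le 3$. If there are $k$ indices $i$ for which $z(i,h)$ is not constant in $h$, then the matrix $M(\mathcal{V}, z, w)$ has at least $k$ diagonal entries, in rows/columns indexed by $B$, of absolute value at least $1/50$.
   Context: An instance of the (3,2-2) Set Splitting Problem consists of $\pm1$ variables $x(1),\dots,x(n)$ and sets $S_1,\dots,S_m \subseteq \{1,\dots,n\}$ each of size exactly 4, with each variable in at most 3 sets; $x$ satisfies $S_j$ if $\sum_{i\in S_j} x(i) = 0$. Let $q_1 = \tfrac15 (1,4,-2,-2)^T$, $q_2 = \tfrac15(4,1,2,2)^T$, $q_3 = \tfrac15(-2,2,-1,4)^T$, $q_4 = \tfrac15(-2,2,4,-1)^T$ (an orthonormal basis of $\mathbb{R}^4$). The first reduction: for each $i$ let $A_i = \{ j : i \in S_j\}$; if $|A_i| = t$ (so $t\le 3$), introduce a set $B_i$ of $4 - t$ new coordinates (so $B_i \neq \emptyset$). Let $A = \{1,\dots,m\}$, $B = \bigcup_i B_i$ (disjoint union of new coordinates), and work in $\mathbb{R}^{A \cup B}$. Let $T_i = A_i \cup B_i$ (a set of 4 coordinates) and fix a bijection of $T_i$ with $\{1,2,3,4\}$. For $1\le h\le 4$, $q_{i,h}$ is the vector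 that is zero outside $T_i$ and equals $\tfrac12 q_h$ on $T_i$ (via the bijection). For each $j \in B$ and $1 \le h \le 3$ let $r_{j,h} = \tfrac12 e_j$. $\mathcal{V}$ is the list of all $q_{i,h}$ and $r_{j,h}$. For signs $z(i,h)$, $w(j,h)$, set $M(\mathcal{V}, z, w) = \sum_{i,h} z(i,h) q_{i,h} q_{i,h}^T + \sum_{j \in B, h} w(j,h) r_{j,h} r_{j,h}^T$. *)

(* Defs.v *)
From HB Require Import structures.
From mathcomp Require Import all_boot all_order all_algebra.
Set Implicit Arguments. Unset Strict Implicit. Unset Printing Implicit Defensive.
Import Order.TTheory GRing.Theory Num.Theory.
Local Open Scope ring_scope.

Definition Aset (n m : nat) (S : 'I_m -> {set 'I_n}) (i : 'I_n) : {set 'I_m} :=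
  [set j | i \in S j].

Definition Btype (n m : nat) (S : 'I_m -> {set 'I_n}) : finType :=
  {i : 'I_n & 'I_(4 - #|Aset S i|)}.

(* coordinates A \cup B (disjoint), A = {1..m} *)
Definition coordT (n m : nat) (S : 'I_m -> {set 'I_n}) : finType :=
  ('I_m + Btype S)%type.

Definition Bset (n m : nat) (S : 'I_m -> {set 'I_n}) (i : 'I_n) : {set Btype S} :=
  [set b : Btype S | tag b == i].

Definition Tset (n m : nat) (S : 'I_m -> {set 'I_n}) (i : 'I_n) : {set coordT S} :=
  [set (inl j : coordT S) | j in Aset S i] :|: [set (inr b : coordT S) | b in Bset S i].

(* 5 * q_h(c), rows h = 1..4 (here 0..3), columns c *)
Definition qnum (h c : 'I_4) : int :=
  nth 0 (nth [::] [:: [:: 1; 4; -2; -2]; [:: 4; 1; 2; 2];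
                      [:: -2; 2; -1; 4]; [:: -2; 2; 4; -1]]%Z h) c.

Definition qv (R : realFieldType) (h c : 'I_4) : R := (qnum h c)%:~R / 5%:R.

(* q_{i,h}: zero outside T_i, (1/2) q_h on T_i via the bijection f i : 'I_4 -> T_i *)
Definition qvec (R : realFieldType) (n m : nat) (S : 'I_m -> {set 'I_n})
  (f : 'I_n -> 'I_4 -> coordT S) (i : 'I_n) (h : 'I_4) (x : coordT S) : R :=
  \sum_(c < 4) (if x == f i c then 2%:R^-1 * qv R h c else 0).

Definition rvec (R : realFieldType) (n m : nat) (S : 'I_m -> {set 'I_n})
  (b : Btype S) (x : coordT S) : R :=
  if x == inr b then 2%:R^-1 else 0.

Definition Mentry (R : realFieldType) (n m : nat) (S : 'I_m -> {set 'I_n})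
  (f : 'I_n -> 'I_4 -> coordT S) (z : 'I_n -> 'I_4 -> R) (w : Btype S -> 'I_3 -> R)
  (x y : coordT S) : R :=
  \sum_(i < n) \sum_(h < 4) z i h * qvec R f i h x * qvec R f i h y
  + \sum_(b : Btype S) \sum_(h < 3) w b h * rvec R b x * rvec R b y.

(* Main.v *)
Require Import Defs.
From HB Require Import structures.
From mathcomp Require Import all_boot all_order all_algebra.
From mathcomp Require Import ring lra.
Import Order.TTheory GRing.Theory Num.Theory.
Local Open Scope ring_scope.


Lemma keyint (c : 'I_4) (e : 'I_4 -> int) (g : 'I_3 -> int) :
  (forall h, e h = 1 \/ e h = -1) -> (forall h, g h = 1 \/ g h = -1) ->
  (exists h h', e h != e h') ->
  2 <= `|\sum_(h < 4) e h * qnum h c ^+ 2 + 25 * \sum_(h < 3) g h|.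
Proof.
move=> he hg [h0 [h1 hne]].
have hn : ~~ [&& e (lift ord0 ord0) == e ord0, e (lift ord0 (lift ord0 ord0)) == e ord0
   & e (lift ord0 (lift ord0 (lift ord0 ord0))) == e ord0].
  apply/negP => /and3P [E1 E2 E3].
  have Eh : forall h, e h = e ord0.
    case=> [[|[|[|[|//]]]] Hh].
    - by congr e; apply: val_inj.
    - by rewrite -(eqP E1); congr e; apply: val_inj.
    - by rewrite -(eqP E2); congr e; apply: val_inj.
    - by rewrite -(eqP E3); congr e; apply: val_inj.
  by move: hne; rewrite !Eh eqxx.
move: hn; rewrite !big_ord_recl !big_ord0.
case: (he ord0) => ->; case: (he (lift ord0 ord0)) => ->;
case: (he (lift ord0 (lift ord0 ord0))) => ->;
case: (he (lift ord0 (lift ord0 (lift ord0 ord0)))) => ->;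
case: (hg ord0) => ->; case: (hg (lift ord0 ord0)) => ->;
case: (hg (lift ord0 (lift ord0 ord0))) => ->;
case: c => [[|[|[|[|//]]]] Hc] //.
Qed.

Section S.
Variables (R : realFieldType) (n m : nat) (S : 'I_m -> {set 'I_n})
  (f : 'I_n -> 'I_4 -> coordT S)
  (hfinj : forall i, injective (f i))
  (hfim : forall i, f i @: [set: 'I_4] = Tset S i)
  (z : 'I_n -> 'I_4 -> R) (w : Btype S -> 'I_3 -> R).

Lemma inT (b : Btype S) : (inr b : coordT S) \in Tset S (tag b).
Proof. by rewrite /Tset inE; apply/orP; right; apply: imset_f; rewrite inE. Qed.

Lemma notinT (b : Btype S) i : i != tag b -> (inr b : coordT S) \notin Tset S i.
Proof.
move=> hi; apply/negP; rewrite /Tset inE => /orP [/imsetP [j _] //|/imsetP [b' hb' [eb]]].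
by move: hb'; rewrite inE -eb eq_sym (negbTE hi).
Qed.

Lemma qvec_self i h c : qvec R f i h (f i c) = 2%:R^-1 * qv R h c.
Proof.
rewrite /qvec (bigD1 c) //= eqxx big1 ?addr0 // => c' hc'.
by rewrite (inj_eq (hfinj i)) eq_sym (negbTE hc').
Qed.

Lemma qvec_other (b : Btype S) i h : i != tag b -> qvec R f i h (inr b) = 0.
Proof.
move=> hi; rewrite /qvec big1 // => c _.
case: eqP => // E; have := @notinT b i hi; rewrite -hfim E.
by rewrite imset_f.
Qed.

Lemma Mdiag (b : Btype S) c : f (tag b) c = inr b ->
  Mentry f z w (inr b) (inr b) =
  \sum_(h < 4) z (tag b) h * (2%:R^-1 * qv R h c) * (2%:R^-1 * qv R h c)
  + \sum_(h < 3) w b h * 2%:R^-1 * 2%:R^-1.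
Proof.
move=> Hc; rewrite /Mentry (bigD1 (tag b)) //= (bigD1 b) //=.
rewrite [X in _ + X + _]big1 ?addr0; last first.
  by move=> i hi; apply: big1 => h _; rewrite qvec_other // !mulr0.
rewrite [X in _ + (_ + X)]big1 ?addr0; last first.
  move=> b' hb'; apply: big1 => h _; rewrite /rvec.
  have -> : ((inr b : coordT S) == inr b') = false.
    by apply/eqP => -[E]; move: hb'; rewrite E eqxx.
  by rewrite !mulr0.
rewrite /rvec eqxx -Hc; congr (_ + _); apply: eq_bigr => h _; by rewrite qvec_self.
Qed.


Lemma Mbound (hz : forall i h, z i h = 1 \/ z i h = -1)
  (hw : forall b h, w b h = 1 \/ w b h = -1) (b : Btype S) c :
  f (tag b) c = inr b -> (exists h h', z (tag b) h != z (tag b) h') ->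
  50%:R^-1 <= `|Mentry f z w (inr b) (inr b)|.
Proof.
move=> Hc [h0 [h1 hne]]; rewrite (@Mdiag b c Hc).
set i := tag b.
pose ez h : int := if z i h == 1 then 1 else -1.
pose ew h : int := if w b h == 1 then 1 else -1.
have Ez : forall h, z i h = (ez h)%:~R.
  move=> h; rewrite /ez; case: eqP => [->|hn] //.
  by case: (hz i h) hn => // -> _; rewrite rmorphN1.
have Ew : forall h, w b h = (ew h)%:~R.
  move=> h; rewrite /ew; case: eqP => [->|hn] //.
  by case: (hw b h) hn => // -> _; rewrite rmorphN1.
have hez : forall h, ez h = 1 \/ ez h = -1 by move=> h; rewrite /ez; case: eqP; auto.
have hew : forall h, ew h = 1 \/ ew h = -1 by move=> h; rewrite /ew; case: eqP; auto.
have hex : exists h h', ez h != ez h'.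
  exists h0, h1; apply/negP => /eqP E; move: hne; by rewrite !Ez E eqxx.
have hk := @keyint c ez ew hez hew hex.
have -> : \sum_(h < 4) z i h * (2%:R^-1 * qv R h c) * (2%:R^-1 * qv R h c)
  + \sum_(h < 3) w b h * 2%:R^-1 * 2%:R^-1 =
  (\sum_(h < 4) ez h * qnum h c ^+ 2 + 25 * \sum_(h < 3) ew h)%:~R / 100%:R.
  rewrite rmorphD rmorphM !rmorph_sum /= !big_ord_recl !big_ord0 /qv !Ez !Ew.
  rewrite ?rmorphM ?rmorphXn /=.
  by field.
have hk' : (2 : R) <= `|(\sum_(h < 4) ez h * qnum h c ^+ 2 + 25 * \sum_(h < 3) ew h)%:~R|.
  by rewrite -intr_norm (_ : 2 = (2:int)%:~R) // ler_int.
move: hk'; set K := (_ %:~R).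
rewrite normrM normfV (@ger0_norm _ 100%:R) // => hk'.
lra.
Qed.
End S.

Theorem lemma8 (R : realFieldType) (n m : nat) (S : 'I_m -> {set 'I_n})
  (hS4 : forall j, #|S j| = 4%N)
  (hA3 : forall i, (#|Aset S i| <= 3)%N)
  (f : 'I_n -> 'I_4 -> coordT S)
  (hfinj : forall i, injective (f i))
  (hfim : forall i, f i @: [set: 'I_4] = Tset S i)
  (z : 'I_n -> 'I_4 -> R) (w : Btype S -> 'I_3 -> R)
  (hz : forall i h, z i h = 1 \/ z i h = -1)
  (hw : forall b h, w b h = 1 \/ w b h = -1) :
  (#|[set i : 'I_n | [exists h : 'I_4, exists h' : 'I_4, z i h != z i h']]|
     <= #|[set b : Btype S | ((50%:R^-1 : R) <= `|Mentry f z w (inr b) (inr b)|)%R]|)%N.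
Proof.
have hpos : forall i, (0 < 4 - #|Aset S i|)%N by move=> i; rewrite subn_gt0 ltnS.
pose g (i : 'I_n) : Btype S := Tagged (fun i => 'I_(4 - #|Aset S i|)) (Ordinal (hpos i)).
have ginj : injective g by move=> i j /(congr1 tag).
rewrite -(card_imset _ ginj); apply: subset_leq_card; apply/subsetP => x /imsetP [i].
rewrite inE => /existsP [h /existsP [h' hne]] ->.
rewrite inE.
have [c Hc] : exists c, f (tag (g i)) c = inr (g i).
  have HT := @inT n m S (g i); rewrite -hfim in HT; case/imsetP: HT => c _ E; by exists c.
apply: (@Mbound R n m S f hfinj hfim z w hz hw (g i) c Hc); by exists h, h'.
Qed.
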